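(* Let $H$ be a simple undirected graph on vertex set $[n]$, let $\{u_i\}_{i=1}^n$ and $\{w_j\}_{j=1}^n$ be two orthonormal families in $\mathbb{C}^d$, and let $\rho\in\mathcal{F}_H$ be a bipartite state that is PPT. Let $\{e_i\}$ be the standard basis of $\mathbb{C}^n$. Then: (1) with $K=\sum_{i=1}^n |e_i\rangle\langle u_i\otimes w_i|$, we have $Z_K(\rho)=K\rho K^*\in\mathcal{M}_n^+(H)$; (2) with $K=\sum_{i=1}^n |e_i\rangle\langle u_i\otimes \overline{w_i}|$, we have $Z^\Gamma_K(\rho)=K\rho^\Gamma K^*\in\mathcal{M}_n^+(H)$.
   Context: $\rho^\Gamma$ denotes the partial transpose on the second factor (in the standard basis), and $\overline{w}$ is entrywise complex conjugation; $\rho$ is PPT if $\rho\ge0$ and $\rho^\Gamma\ge 0$. For an $n\times n$ matrix $X$, $G(X)$ is the undirected graph on $[n]$ with edge set $\{\{i,j\}: i\ne j,\ X_{ij}X_{ji}\neq 0\}$ (for nonnegative matrices: both entries positive). $\mathcal{M}_n(H)$ is the set of self-adjoint $n\times n$ matrices $X$ with $G(X)\subseteq H$, and $\mathcal{M}_n^+(H)=\mathcal{M}_n^+\cap\mathcal{M}_n(H)$. Given the families $\{u_i\},\{w_j\}$, for a bipartite PSD $\rho$ define the $n\times n$ nonnegative matrix $D(\rho)_{ij}=\langle u_i\otimes w_j|\rho|u_i\otimes w_j\rangle$, and let $\mathcal{F}_H=\{\rho\in(\mathcal{M}_d\otimes\mathcal{M}_d)^+ : G(D(\rho))\subseteq H\}$.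 *)

(* Defs.v *)
From HB Require Import structures.
From mathcomp Require Import all_boot all_order all_algebra.
From mathcomp Require Export mxtens.
Set Implicit Arguments. Unset Strict Implicit. Unset Printing Implicit Defensive.
Import Order.TTheory GRing.Theory Num.Theory.
Local Open Scope ring_scope.

Definition adjoint_mx (C : numClosedFieldType) m n (A : 'M[C]_(m, n)) : 'M[C]_(n, m) :=
  map_mx Num.conj (A^T).

Definition entry_conj (C : numClosedFieldType) m n (A : 'M[C]_(m, n)) : 'M[C]_(m, n) :=
  map_mx Num.conj A.

Definition selfadj_mx (C : numClosedFieldType) n (A : 'M[C]_n) : Prop := adjoint_mx A = A.

Definition psd_mx (C : numClosedFieldType) n (A : 'M[C]_n) : Prop :=
  selfadj_mx A /\ forall v : 'cV[C]_n, 0 <= (adjoint_mx v *m A *m v) ord0 ord0.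

Definition orthonormal_family (C : numClosedFieldType) d n (u : 'I_n -> 'cV[C]_d) : Prop :=
  forall i j, (adjoint_mx (u i) *m u j) ord0 ord0 = (i == j)%:R.

(* partial transpose on the second factor of C^d (x) C^d (standard basis,
   Kronecker index (a,b) |-> a*d+b as in tensmx) *)
Definition partial_transpose (C : numClosedFieldType) d (rho : 'M[C]_(d * d)) : 'M[C]_(d * d) :=
  \matrix_(i, j) rho (mxtens_index ((mxtens_unindex i).1, (mxtens_unindex j).2))
                     (mxtens_index ((mxtens_unindex j).1, (mxtens_unindex i).2)).

Definition ppt (C : numClosedFieldType) d (rho : 'M[C]_(d * d)) : Prop :=
  psd_mx rho /\ psd_mx (partial_transpose rho).

Definition simple_graph n (H : rel 'I_n) : Prop :=
  symmetric H /\ irreflexive H.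

(* G(X) subset of H: every edge {i,j} (i<>j, X_ij X_ji <> 0) of G(X) is an edge of H *)
Definition graph_sub (C : numClosedFieldType) n (X : 'M[C]_n) (H : rel 'I_n) : Prop :=
  forall i j, i != j -> X i j * X j i != 0 -> H i j.

Definition Mplus (C : numClosedFieldType) n (H : rel 'I_n) (X : 'M[C]_n) : Prop :=
  psd_mx X /\ graph_sub X H.

Definition Dmat (C : numClosedFieldType) d n (u w : 'I_n -> 'cV[C]_d)
  (rho : 'M[C]_(d * d)) : 'M[C]_n :=
  \matrix_(i, j) (adjoint_mx (u i *t w j) *m rho *m (u i *t w j)) ord0 ord0.

Definition FH (C : numClosedFieldType) d n (u w : 'I_n -> 'cV[C]_d)
  (H : rel 'I_n) (rho : 'M[C]_(d * d)) : Prop :=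
  psd_mx rho /\ graph_sub (Dmat u w rho) H.

Definition Kop (C : numClosedFieldType) d n (u w : 'I_n -> 'cV[C]_d) : 'M[C]_(n, d * d) :=
  \sum_(i < n) (delta_mx i ord0 : 'cV[C]_n) *m adjoint_mx (u i *t w i).

(* Main.v *)
Require Import Defs.
From HB Require Import structures.
From mathcomp Require Import all_boot all_order all_algebra.
From mathcomp Require Import ring.
Import Order.TTheory GRing.Theory Num.Theory.
Local Open Scope ring_scope.

Set Implicit Arguments.
Section Aux.
Variable C : numClosedFieldType.

Definition form {n} (A : 'M[C]_n) (x y : 'cV[C]_n) : C := (adjoint_mx x *m A *m y) ord0 ord0.

Lemma formE n (A : 'M[C]_n) (x y : 'cV[C]_n) :
  form A x y = \sum_(p < n) \sum_(q < n) Num.conj (x p 0) * A p q * y q 0.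
Proof.
rewrite /form !mxE; under eq_bigr => q _ do rewrite !mxE big_distrl /=.
rewrite exchange_big /=; apply: eq_bigr => p _; apply: eq_bigr => q _.
by rewrite !mxE.
Qed.

Lemma adjointK m n (A : 'M[C]_(m, n)) : adjoint_mx (adjoint_mx A) = A.
Proof. by apply/matrixP => i j; rewrite !mxE conjCK. Qed.

Lemma adjointM m n p (A : 'M[C]_(m, n)) (B : 'M[C]_(n, p)) :
  adjoint_mx (A *m B) = adjoint_mx B *m adjoint_mx A.
Proof.
apply/matrixP => i j; rewrite !mxE rmorph_sum; apply: eq_bigr => k _.
by rewrite !mxE rmorphM mulrC.
Qed.

Lemma psd_conj m n (K : 'M[C]_(m, n)) (A : 'M[C]_n) :
  psd_mx A -> psd_mx (K *m A *m adjoint_mx K).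
Proof.
move=> [sa pos]; split.
  by rewrite /selfadj_mx !adjointM adjointK sa mulmxA.
move=> v; have := pos (adjoint_mx K *m v).
by rewrite adjointM adjointK !mulmxA.
Qed.

Lemma form_sym n (A : 'M[C]_n) x y : selfadj_mx A -> form A y x = (form A x y)^*.
Proof.
move=> sa; rewrite !formE rmorph_sum exchange_big; apply: eq_bigr => p _.
rewrite rmorph_sum; apply: eq_bigr => q _.
have -> : A q p = (A p q)^*.
  by rewrite -{1}sa !mxE.
by rewrite !rmorphM /= conjCK; ring.
Qed.


Lemma adjoint_lin m (s : C) (x y : 'cV[C]_m) :
  adjoint_mx (s *: x + y) = s^* *: adjoint_mx x + adjoint_mx y.
Proof. by apply/matrixP => i j; rewrite !mxE rmorphD rmorphM. Qed.

Lemma form_linl n (A : 'M[C]_n) s x y z :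
  form A (s *: x + y) z = s^* * form A x z + form A y z.
Proof.
by rewrite /form adjoint_lin !mulmxDl -!scalemxAl !mxE.
Qed.

Lemma form_linr n (A : 'M[C]_n) s x y z :
  form A z (s *: x + y) = s * form A z x + form A z y.
Proof.
by rewrite /form !mulmxDr -!scalemxAr !mxE.
Qed.

Lemma form_nz n (A : 'M[C]_n) x y : psd_mx A -> form A x y != 0 -> form A x x != 0.
Proof.
move=> [sa pos] nz; apply/eqP => x0.
have g0 : 0 <= form A y y := pos y.
have bc : (form A x y)^* != 0 by rewrite conjC_eq0.
have := pos ((- (form A y y + 1) / (form A x y)^*) *: x + y).
rewrite -/(form _ _ _) form_linl !form_linr x0 (form_sym x y sa) mulr0 add0r.
have sc : (- (form A y y + 1) / (form A x y)^*)^* = - (form A y y + 1) / form A x y.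
  rewrite fmorph_div /= rmorphN rmorphD /= conjC1 (geC0_conj g0).
  by rewrite conjCK.
rewrite sc.
rewrite divfK // divfK //.
move=> h.
have : 0 < form A y y + 2 by rewrite ltr_wpDl.
suff -> : form A y y + 2 = - (- (form A y y + 1) + (- (form A y y + 1) + form A y y)).
  by rewrite oppr_gt0 => lt; have := le_lt_trans h lt; rewrite ltxx.
ring.
Qed.

Lemma form_nz2 n (A : 'M[C]_n) x y : psd_mx A -> form A x y != 0 ->
  form A x x != 0 /\ form A y y != 0.
Proof.
move=> hA nz; split; first exact: form_nz nz.
apply: (@form_nz _ A y x hA).
by rewrite (form_sym _ _ hA.1) conjC_eq0.
Qed.


Lemma sum_tens m n (F : 'I_(m * n) -> C) :
  \sum_(p < m * n) F p = \sum_(i < m) \sum_(j < n) F (mxtens_index (i, j)).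
Proof.
rewrite pair_big /= (reindex (@mxtens_index m n)) /=.
  by apply: eq_bigr => -[i j].
by exists (@mxtens_unindex m n) => k _; rewrite (mxtens_indexK, mxtens_unindexK).
Qed.

Lemma tensE m n (a : 'cV[C]_m) (b : 'cV[C]_n) i j (k : 'I_(1 * 1)) :
  (a *t b) (mxtens_index (i, j)) k = a i 0 * b j 0.
Proof.
rewrite mxE mxtens_indexK /=; congr (a _ _ * b _ _); exact: ord1.
Qed.

Lemma pt_form d (rho : 'M[C]_(d * d)) (a b c e : 'cV[C]_d) :
  form (partial_transpose rho) (a *t b) (c *t e) =
  form rho (a *t entry_conj e) (c *t entry_conj b).
Proof.
rewrite !formE sum_tens [RHS]sum_tens; apply: eq_bigr => p1 _.
under eq_bigr => p2 _ do rewrite sum_tens.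
under [RHS]eq_bigr => p2 _ do rewrite sum_tens.
rewrite exchange_big; under eq_bigr => i _ do rewrite exchange_big.
rewrite exchange_big /=.
apply: eq_bigr => s _; apply: eq_bigr => q1 _; apply: eq_bigr => t _.
rewrite !tensE !mxE !mxtens_indexK /= !rmorphM /= !conjCK.
ring.
Qed.


Lemma KopE d n (u w : 'I_n -> 'cV[C]_d) :
  Kop u w = \matrix_(i, p) ((u i *t w i) p 0)^*.
Proof.
apply/matrixP => i p; rewrite /Kop summxE (bigD1 i) //= big1 => [|k ki].
  by rewrite !mxE big_ord1 !mxE !eqxx /= mul1r addr0.
by rewrite !mxE big_ord1 !mxE eq_sym (negbTE ki) /= mul0r.
Qed.

Lemma Kop_entry d n (u w : 'I_n -> 'cV[C]_d) (A : 'M[C]_(d * d)) i j :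
  (Kop u w *m A *m adjoint_mx (Kop u w)) i j = form A (u i *t w i) (u j *t w j).
Proof.
rewrite KopE /form !mxE; apply: eq_bigr => q _; rewrite !mxE conjCK.
congr (_ * _); apply: eq_bigr => p _; by rewrite !mxE.
Qed.


Lemma entry_conjK m n (x : 'M[C]_(m, n)) : entry_conj (entry_conj x) = x.
Proof. by apply/matrixP => i j; rewrite !mxE conjCK. Qed.

End Aux.
Arguments form {C n}.

Theorem mainTheorem4 (C : numClosedFieldType) (d n : nat) (H : rel 'I_n)
  (u w : 'I_n -> 'cV[C]_d) (rho : 'M[C]_(d * d)) :
  simple_graph H -> orthonormal_family u -> orthonormal_family w ->
  FH u w H rho -> ppt rho ->
  Mplus H (Kop u w *m rho *m adjoint_mx (Kop u w)) /\
  Mplus H (Kop u (fun j => entry_conj (w j)) *m partial_transpose rho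
             *m adjoint_mx (Kop u (fun j => entry_conj (w j)))).
Proof.
move=> _ _ _ [rpsd gD] [_ ptpsd]; split; split.
- exact: psd_conj.
- move=> i j ij; rewrite !Kop_entry => nz.
  have nz1 : form rho (u i *t w i) (u j *t w j) != 0.
    by apply: contraNneq nz => ->; rewrite mul0r.
  rewrite -[w i]entry_conjK -[w j]entry_conjK -pt_form in nz1.
  have [h1 h2] := @form_nz2 _ _ _ _ _ ptpsd nz1.
  rewrite pt_form !entry_conjK in h1; rewrite pt_form !entry_conjK in h2.
  by apply: gD ij _; apply: mulf_neq0; rewrite mxE.
- exact: psd_conj.
- move=> i j ij; rewrite !Kop_entry => nz.
  have nz1 : form (partial_transpose rho) (u i *t entry_conj (w i))
                (u j *t entry_conj (w j)) != 0.
    by apply: contraNneq nz => ->; rewrite mul0r.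
  rewrite pt_form !entry_conjK in nz1.
  have [h1 h2] := @form_nz2 _ _ _ _ _ rpsd nz1.
  by apply: gD ij _; apply: mulf_neq0; rewrite mxE.
Qed.
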